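(* For all $0\le t<1$ and $x\in\mathbb{R}$, $V^*(t,x)\ge f(t,x)$, where $$V^*(t,x)=\begin{cases}\sqrt{1-t}\,\sqrt{2\pi}\,\Phi(-x/\sqrt{1-t})e^{x^2/(2(1-t))}v(C^* ), & x>C^*\sqrt{1-t},\\ f(t,x), & x\le C^*\sqrt{1-t}.\end{cases}$$
   Context: $\Phi$ is the standard normal distribution function. $B^*\approx0.84$ is the unique positive solution of $\sqrt{2\pi}(1-B^2)e^{B^2/2}\Phi(B)=B$. Define $U(t,x)=\sqrt{2\pi(1-t)}(1-(B^* )^2)e^{x^2/(2(1-t))}\Phi(x/\sqrt{1-t})$ for $x<B^*\sqrt{1-t}$, and $U(t,x)=x$ otherwise, for $0\le t<1$. Set $f(t,x)=U(t,x)-x$. For $C\le B^*$ let $v(C)=\frac{1}{\Phi(-C)}[(1-(B^* )^2)\Phi(C)-Ce^{-C^2/2}/\sqrt{2\pi}]$ and $u(C)=1-(B^* )^2-(1-C^2)\Phi(-C)-\frac{C}{\sqrt{2\pi}}e^{-C^2/2}$. $C^*<0$ is the unique negative zero of $u$, which maximizes $v$ on $(-\infty,B^*]$. *)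

(* Defs.v *)
From Stdlib Require Import Reals.
From Coquelicot Require Import Coquelicot.
Open Scope R_scope.

Definition Phi (x : R) : R :=
  / sqrt (2 * PI) *
  RInt_gen (fun s : R => exp (- s ^ 2 / 2)) (Rbar_locally m_infty) (at_point x).

Definition Bstar_eq (B : R) : Prop :=
  sqrt (2 * PI) * (1 - B ^ 2) * exp (B ^ 2 / 2) * Phi B = B.

Definition Ufun (B t x : R) : R :=
  if Rlt_dec x (B * sqrt (1 - t)) then
    sqrt (2 * PI * (1 - t)) * (1 - B ^ 2) * exp (x ^ 2 / (2 * (1 - t)))
      * Phi (x / sqrt (1 - t))
  else x.

Definition fval (B t x : R) : R := Ufun B t x - x.

Definition vfun (B C : R) : R :=
  / Phi (- C) * ((1 - B ^ 2) * Phi C - C * exp (- C ^ 2 / 2) / sqrt (2 * PI)).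

Definition ufun (B C : R) : R :=
  1 - B ^ 2 - (1 - C ^ 2) * Phi (- C) - C / sqrt (2 * PI) * exp (- C ^ 2 / 2).

Definition Vstar (B C t x : R) : R :=
  if Rlt_dec (C * sqrt (1 - t)) x then
    sqrt (1 - t) * sqrt (2 * PI) * Phi (- x / sqrt (1 - t))
      * exp (x ^ 2 / (2 * (1 - t))) * vfun B C
  else fval B t x.

(* Main.v *)
Set Warnings "-notation-overridden,-ambiguous-paths,-notation-incompatible-prefix,-deprecated,-require-in-module".
Require Import Defs.
From Stdlib Require Import Reals Lra.
From Coquelicot Require Import Coquelicot.
From Stdlib Require Import ssreflect.
Open Scope R_scope.

Definition gq (u : R) : R := exp (- u ^ 2).

Lemma gq_cont (u : R) : continuous gq u.
Proof.
apply: ex_derive_continuous. unfold gq. auto_derive. trivial.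
Qed.

Lemma gq_derive (y : R) : derivable_pt_lim (fun x => RInt gq 0 x) y (gq y).
Proof.
apply is_derive_Reals.
apply: (is_derive_RInt gq _ 0); last exact: (gq_cont y).
apply filter_forall; intro b. apply: (RInt_correct gq 0 b).
apply ex_RInt_continuous; intros z _; exact (gq_cont z).
Qed.

Module MC.
Set Warnings "-notation-overridden,-ambiguous-paths,-notation-incompatible-prefix,-deprecated,-require-in-module".
From mathcomp Require Import all_boot all_order all_algebra.
From mathcomp Require Import all_classical all_reals all_analysis.
From mathcomp Require Import Rstruct Rstruct_topology.
Import Order.TTheory GRing.Theory Num.Theory.
Import numFieldNormedType.Exports.
Local Open Scope classical_set_scope.
Local Open Scope ring_scope.
Lemma bridge_der (F : R -> R) (x l : R) :
  derivable_pt_lim F x l -> @is_derive R R^o R^o x 1 F l.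
Proof.
move=> H.
pose q (h : R^o) : R^o := h^-1 * (F (h + x) - F x).
have Hq : q @ (0:R^o)^' --> (l:R^o).
  apply/cvgrPdist_lt => e /RltP e0.
  have [d Hd] := H e e0.
  rewrite /dnbhs /within /=.
  apply/nbhs_ballP; exists (pos d); first by apply/RltP; exact: cond_pos.
  move=> h /= hb hn0.
  have hd : (Rabs h < d)%coqR.
    move: hb; rewrite /ball /= sub0r normrN => /RltP H1; exact H1.
  have := Hd h (fun E => (negP hn0) (introT eqP E)) hd.
  move=> /RltP; rewrite RabsE distrC.
  by rewrite /q /= Rplus_comm mulrC.
constructor.
  rewrite /derivable.
  match goal with |- cvg (?g @ _) => have -> : g = q end.
    apply/funext => h; rewrite /q /= /shift /=.
    by rewrite /GRing.scale /= mulr1.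
  apply/cvg_ex; exists l. exact: Hq.
rewrite /derive.
match goal with |- lim (?g @ _) = _ => have -> : g = q end.
  apply/funext => h; rewrite /q /= /shift /=.
  by rewrite /GRing.scale /= mulr1.
exact: cvg_lim Hq.
Qed.
Lemma atan_eq (x : R) : Ratan.atan x = atan x.
Proof.
have H : forall y : R, Ratan.atan y - atan y = Ratan.atan 0 - atan 0.
  move=> y; apply: (is_derive_0_is_cst (f := fun z : R => Ratan.atan z - atan z)) => z.
  have h1 := @bridge_der _ _ _ (derivable_pt_lim_atan z).
  have h2 := @is_derive1_atan R z.
  have := is_deriveB h1 h2.
  have -> : (/ (1 + z ^ 2))%coqR - (1 + z ^+ 2)^-1 = 0.
    by rewrite RpowE RinvE subrr.
  done.
have := H x; rewrite atan0 Ratan.atan_0 subrr; exact: subr0_eq.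
Qed.

Lemma PI_eq : PI = pi.
Proof.
have := atan_eq 1; rewrite atan_1 atan1 -INRE => E.
change (PI / 4 = pi / INR 4)%coqR in E.
simpl INR in E. lra.
Qed.
Definition FF (x : R) : R := RInt.RInt gq 0 x.

Lemma gq_gauss (u : R) : gq u = gauss_fun u.
Proof. by rewrite /gq RexpE RpowE /gauss_fun. Qed.

Lemma FF_der (y : R) : @is_derive R R^o R^o y 1 FF (gauss_fun y).
Proof. rewrite -gq_gauss; exact: (@bridge_der _ _ _ (gq_derive y)). Qed.

Lemma FF_cont (y : R) : {for y, continuous FF}.
Proof.
apply: (@differentiable_continuous _ R^o R^o); apply/derivable1_diffP.
exact: (@ex_derive _ _ _ _ _ _ _ (FF_der y)).
Qed.

Lemma int_eq (x : R) : 0 < x -> gauss_integral_proof.integral0_gauss x = FF x.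
Proof.
move=> x0.
have := @continuous_FTC2 R gauss_fun FF 0 x x0.
have -> : FF 0 = 0 by rewrite /FF RInt.RInt_point.
move=> H.
rewrite /gauss_integral_proof.integral0_gauss /Rintegral H //=; first by rewrite subr0.
- by apply: continuous_subspaceT; exact: continuous_gauss_fun.
- split.
  + move=> y _; exact: (@ex_derive _ _ _ _ _ _ _ (FF_der y)).
  + apply: cvg_at_right_filter; exact: FF_cont.
  + apply: cvg_at_left_filter; exact: FF_cont.
- move=> y _; rewrite derive1E; exact: (@derive_val _ _ _ _ _ _ _ (FF_der y)).
Qed.
Lemma FF_lim_mc : (FF x : R^o) @[x --> +oo] --> (Num.sqrt pi / 2 : R^o).
Proof.
have cvg_Ig : @gauss_integral_proof.integral0_gauss R x @[x --> +oo] --> Num.sqrt pi / 2.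
  have : Num.sqrt (@gauss_integral_proof.integral0_gauss R x ^+ 2) @[x --> +oo]
      --> Num.sqrt (pi / 4).
    apply: continuous_cvg => //;
      [exact: sqrt_continuous|exact: gauss_integral_proof.cvg_integral0_gauss_sqr].
  rewrite sqrtrM ?pi_ge0// sqrtrV// (_ : 4 = 2 ^+ 2); last first.
    by rewrite expr2 -natrM.
  rewrite sqrtr_sqr ger0_norm//.
  rewrite (_ : (fun _ => Num.sqrt _) = gauss_integral_proof.integral0_gauss)//.
  apply/funext => r; rewrite sqrtr_sqr// ger0_norm//.
  exact: gauss_integral_proof.integral0_gauss_ge0.
apply: cvg_trans cvg_Ig; apply: near_eq_cvg.
near=> x; rewrite int_eq //.
Unshelve. end_near. Qed.
Lemma FF_lim_std (eps : R) : (0 < eps)%coqR ->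
  exists M : R, forall x : R, (M < x)%coqR -> (Rabs (FF x - sqrt PI / 2) < eps)%coqR.
Proof.
move=> /RltP e0.
have H := (proj1 (cvgrPdist_lt _ _) FF_lim_mc). have := H _ eps e0.
move=> [M [Mr HM]].
exists M => x /RltP Mx.
have := HM x Mx; rewrite distrC -RabsE -RsqrtE -PI_eq => /RltP.
done.
Qed.
End MC.

Lemma FF_lim_std : forall eps : R, (0 < eps) ->
  exists M : R, forall x : R, (M < x) -> (Rabs (RInt gq 0 x - sqrt PI / 2) < eps).
Proof. exact: MC.FF_lim_std. Qed.

Definition fn (s : R) : R := exp (- s ^ 2 / 2).
Lemma fn_cont (u : R) : continuous fn u.
Proof. apply: ex_derive_continuous. unfold fn. auto_derive. trivial. Qed.
Lemma fn_ex (a b : R) : ex_RInt fn a b.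
Proof. apply: ex_RInt_continuous => z _; exact: fn_cont. Qed.
Lemma gq_ex (a b : R) : ex_RInt gq a b.
Proof. apply: ex_RInt_continuous => z _; exact: gq_cont. Qed.

Lemma sqrt2_pos : 0 < sqrt 2.
Proof. apply: sqrt_lt_R0; lra. Qed.

Lemma fn_int_left (a : R) : RInt fn a 0 = sqrt 2 * RInt gq 0 (- a / sqrt 2).
Proof.
have h2 := sqrt2_pos.
have s2 : sqrt 2 * sqrt 2 = 2 by apply: sqrt_sqrt; lra.
have H := RInt_comp_lin gq (- / sqrt 2) 0 a 0 (gq_ex _ _).
have E : RInt (fun y => scal (- / sqrt 2) (gq (- / sqrt 2 * y + 0))) a 0
       = scal (- / sqrt 2) (RInt fn a 0).
  rewrite -RInt_scal; last exact: fn_ex.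
  apply: RInt_ext => x _. congr scal. rewrite /gq /fn. congr exp.
  field_simplify; last lra. rewrite (_ : sqrt 2 ^ 2 = 2); first field.
  by rewrite /= Rmult_1_r s2.
rewrite E in H.
rewrite (_ : - / sqrt 2 * a + 0 = - a / sqrt 2) in H; last by field; lra.
rewrite (_ : - / sqrt 2 * 0 + 0 = 0) in H; last by ring.
rewrite -(opp_RInt_swap gq 0 (-a/sqrt 2) (gq_ex _ _)) in H.
move: H. rewrite /scal /= /mult /= /opp /=.
move=> H.
have H2 : sqrt 2 * (- / sqrt 2 * RInt fn a 0) = sqrt 2 * (- RInt gq 0 (- a / sqrt 2)) by rewrite H.
rewrite -Rmult_assoc (_ : sqrt 2 * - / sqrt 2 = -1) in H2; last by field; lra.
lra.
Qed.

Lemma gq_incr (z1 z2 : R) : z1 < z2 -> RInt gq 0 z1 < RInt gq 0 z2.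
Proof.
move=> h.
have := RInt_Chasles gq 0 z1 z2 (gq_ex _ _) (gq_ex _ _).
have : 0 < RInt gq z1 z2.
  apply: RInt_gt_0 => //. move=> x _; rewrite /gq; apply: exp_pos.
  move=> x _; exact: gq_cont.
rewrite /plus /=. lra.
Qed.

Lemma gq_lt (z : R) : RInt gq 0 z < sqrt PI / 2.
Proof.
apply: Rnot_le_lt => Hz.
have h1 := gq_incr z (z+1) ltac:(lra).
have [M HM] := FF_lim_std (RInt gq 0 (z+1) - sqrt PI / 2) ltac:(lra).
have h3 := gq_incr (z+1) (Rmax M (z+1) + 1) ltac:(have := Rmax_r M (z+1); lra).
have := HM (Rmax M (z+1) + 1) ltac:(have := Rmax_l M (z+1); lra).
rewrite Rabs_pos_eq; lra.
Qed.

Definition K : R := sqrt (2 * PI) / 2.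

Lemma K_eq : K = sqrt 2 * (sqrt PI / 2).
Proof. rewrite /K sqrt_mult; try lra. have := PI_RGT_0; lra. Qed.

Lemma fn_gen0 : is_RInt_gen fn (Rbar_locally m_infty) (at_point 0) K.
Proof.
move=> P [eps Heps].
have h2 := sqrt2_pos.
have [M HM] := FF_lim_std (eps / sqrt 2) ltac:(apply: Rdiv_lt_0_compat => //; exact: cond_pos eps).
apply: (Filter_prod _ _ _ (fun a => a < - (sqrt 2 * Rabs M))
  (fun b => b = 0)).
- by exists (- (sqrt 2 * Rabs M)).
- done.
- move=> a b Ha Hb; rewrite /= in Ha Hb |- *; subst b.
  exists (RInt fn a 0); split; first exact: (RInt_correct fn a 0 (fn_ex _ _)).
  apply: Heps. rewrite /ball /= /AbsRing_ball /abs /minus /plus /opp /=.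
  rewrite fn_int_left K_eq.
  have HMa : M < - a / sqrt 2.
    apply: (Rmult_lt_reg_r (sqrt 2)) => //.
    rewrite /Rdiv Rmult_assoc Rinv_l; last lra.
    have := Rle_abs M. nra.
  have := HM _ HMa.
  set G := RInt gq 0 (- a / sqrt 2).
  rewrite (_ : sqrt 2 * G + - (sqrt 2 * (sqrt PI / 2)) = sqrt 2 * (G - sqrt PI / 2)); last ring.
  rewrite Rabs_mult (Rabs_pos_eq (sqrt 2)); last lra.
  move=> H.
  have : sqrt 2 * Rabs (RInt gq 0 (- a / sqrt 2) - sqrt PI / 2) < sqrt 2 * (eps / sqrt 2).
    by apply: Rmult_lt_compat_l.
  rewrite (_ : sqrt 2 * (eps / sqrt 2) = eps) //. field. lra.
Qed.

Lemma Phi_eq (y : R) : Phi y = / sqrt (2 * PI) * (K + RInt fn 0 y).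
Proof.
have H : is_RInt_gen fn (Rbar_locally m_infty) (at_point y) (plus K (RInt fn 0 y)).
  apply: (is_RInt_gen_Chasles fn 0 K (RInt fn 0 y) fn_gen0).
  apply/is_RInt_gen_at_point. exact: (RInt_correct fn 0 y (fn_ex _ _)).
have H2 := is_RInt_gen_unique _ _ H.
unfold Phi. fold fn. rewrite H2. reflexivity.
Qed.

Lemma S2_pos : 0 < sqrt (2 * PI).
Proof. apply: sqrt_lt_R0. have := PI_RGT_0; lra. Qed.

Lemma K_val : K = sqrt (2 * PI) / 2.
Proof. by []. Qed.

Lemma fn_odd (y : R) : RInt fn 0 (- y) = - RInt fn 0 y.
Proof.
have H := RInt_comp_lin fn (-1) 0 0 y (fn_ex _ _).
rewrite (_ : -1 * 0 + 0 = 0) in H; last ring.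
rewrite (_ : -1 * y + 0 = - y) in H; last ring.
rewrite -H.
rewrite (RInt_ext _ (fun x => scal (-1) (fn x))).
  rewrite RInt_scal; last exact: fn_ex.
  by rewrite /scal /= /mult /=; ring.
move=> x _. congr scal. rewrite /fn. f_equal. rewrite Rplus_0_r. field.
Qed.

Lemma Phi_sym (y : R) : Phi y + Phi (- y) = 1.
Proof.
rewrite !Phi_eq fn_odd K_val. have := S2_pos. move=> h. field. lra.
Qed.

Lemma Phi_pos (y : R) : 0 < Phi y.
Proof.
rewrite Phi_eq. apply: Rmult_lt_0_compat.
  apply: Rinv_0_lt_compat; exact: S2_pos.
case: (Rle_lt_dec 0 y) => hy.
  have : 0 <= RInt fn 0 y.
    apply: RInt_ge_0 => //; first exact: fn_ex.
    move=> x _; rewrite /fn; apply: Rlt_le; apply: exp_pos.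
  have := S2_pos. rewrite K_val. lra.
rewrite -(opp_RInt_swap fn y 0 (fn_ex _ _)) fn_int_left.
have := gq_lt (- y / sqrt 2). have := sqrt2_pos.
rewrite K_eq /opp /=. nra.
Qed.

Lemma Phi_der (y : R) : is_derive Phi y (fn y / sqrt (2 * PI)).
Proof.
apply: (is_derive_ext (fun y => / sqrt (2 * PI) * (K + RInt fn 0 y))).
  move=> z; by rewrite Phi_eq.
have H : is_derive (fun y => RInt fn 0 y) y (fn y).
  apply: (is_derive_RInt fn _ 0); last exact: fn_cont.
  apply filter_forall; intro b. apply: (RInt_correct fn 0 b (fn_ex _ _)).
have H2 := is_derive_plus (fun _ => K) _ y 0 (fn y) (is_derive_const K y) H.
have H3 := is_derive_scal _ y (/ sqrt (2 * PI)) _ H2.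
move: H3. rewrite /scal /plus /= /mult /=.
rewrite (_ : / sqrt (2 * PI) * (0 + fn y) = fn y / sqrt (2 * PI)) //. field.
have := S2_pos; lra.
Qed.

Lemma fn_even (y : R) : fn (- y) = fn y.
Proof. rewrite /fn. congr exp. field. Qed.

Lemma fn_pos (y : R) : 0 < fn y.
Proof. exact: exp_pos. Qed.

Lemma fn_inv (y : R) : exp (y ^ 2 / 2) * fn y = 1.
Proof. rewrite /fn -exp_plus. rewrite (_ : y ^ 2 / 2 + - y ^ 2 / 2 = 0); last field. exact: exp_0. Qed.

Definition kf (B v y : R) : R :=
  Phi (- y) * v - (1 - B ^ 2) * Phi y + y * fn y / sqrt (2 * PI).

Lemma is_derive_val (f : R -> R) (x l l' : R) : is_derive f x l -> l = l' -> is_derive f x l'.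
Proof. by move=> H <-. Qed.

Lemma kf_der (B v y : R) :
  is_derive (kf B v) y (fn y / sqrt (2 * PI) * (B ^ 2 - v - y ^ 2)).
Proof.
have hs := S2_pos.
have h1 : is_derive (fun y => Phi (- y)) y (- (fn y / sqrt (2 * PI))).
  apply: (is_derive_val _ _ _ _ (is_derive_comp Phi Ropp y _ (-1) (Phi_der (- y)) (is_derive_opp _ y 1 (is_derive_id y)))).
  rewrite /scal /= /mult /= fn_even. field. lra.
have h2 : is_derive (fun y => y * fn y / sqrt (2 * PI)) y ((fn y - y ^ 2 * fn y) / sqrt (2 * PI)).
  rewrite /fn. auto_derive; first done.
  replace (- (y * (y * 1)) * / 2) with (- y ^ 2 / 2) by field. field. lra.
have h3 := is_derive_scal _ y v _ h1.
have h4 := is_derive_scal _ y (1 - B ^ 2) _ (Phi_der y).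
have h5 := is_derive_minus _ _ y _ _ h3 h4.
have h6 := is_derive_plus _ _ y _ _ h5 h2.
move: h6; rewrite /scal /= /mult /= /minus /plus /opp /= => h6.
have h7 : is_derive (kf B v) y
   (v * - (fn y / sqrt (2 * PI)) + - ((1 - B ^ 2) * (fn y / sqrt (2 * PI))) +
      (fn y - y ^ 2 * fn y) / sqrt (2 * PI)).
  apply: (is_derive_ext _ _ _ _ _ h6) => z.
  rewrite /kf. apply: Rminus_diag_uniq. ring.
apply: (is_derive_val _ _ _ _ h7). field. lra.
Qed.

Lemma kf_cont (B v y : R) : continuity_pt (kf B v) y.
Proof.
apply/continuity_pt_filterlim. apply: ex_derive_continuous.
eexists. exact: kf_der.
Qed.

Lemma kf_mvt (B v a b : R) : a <= b ->
  exists c, a <= c <= b /\ kf B v b - kf B v a = fn c / sqrt (2 * PI) * (B ^ 2 - v - c ^ 2) * (b - a).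
Proof.
move=> hab.
have [c [hc E]] := MVT_gen (kf B v) a b (fun y => fn y / sqrt (2 * PI) * (B ^ 2 - v - y ^ 2))
  (fun x _ => kf_der B v x) (fun x _ => kf_cont B v x).
exists c; split; last exact: E.
move: hc; rewrite Rmin_left // Rmax_right //.
Qed.

Lemma vpos (B C : R) (hB : 0 < B) (hBeq : Bstar_eq B) (hC : C < 0) : 0 < vfun B C.
Proof.
have hs := S2_pos.
have hP := Phi_pos (- C).
have hPB := Phi_pos B.
have hPC := Phi_pos C.
have hE := fn_pos C.
have hB1 : 0 < 1 - B ^ 2.
  move: hBeq; rewrite /Bstar_eq => hBeq.
  have he := exp_pos (B ^ 2 / 2).
  have hq : 0 < sqrt (2 * PI) * exp (B ^ 2 / 2) * Phi B.
    apply: Rmult_lt_0_compat => //; apply: Rmult_lt_0_compat => //.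
  apply: Rnot_le_lt => hle.
  have : (1 - B ^ 2) * (sqrt (2 * PI) * exp (B ^ 2 / 2) * Phi B) <= 0.
    apply: Rmult_le_0_r => //; lra.
  have -> : (1 - B ^ 2) * (sqrt (2 * PI) * exp (B ^ 2 / 2) * Phi B) = B.
    rewrite -[in RHS]hBeq; ring.
  lra.
rewrite /vfun. apply: Rmult_lt_0_compat; first exact: Rinv_0_lt_compat.
have : 0 < - C * exp (- C ^ 2 / 2) / sqrt (2 * PI).
  apply: Rdiv_lt_0_compat => //. have := exp_pos (- C ^ 2 / 2). nra.
have : 0 < (1 - B ^ 2) * Phi C by nra.
have -> : (1 - B ^ 2) * Phi C - C * exp (- C ^ 2 / 2) / sqrt (2 * PI) = (1 - B ^ 2) * Phi C + (- C * exp (- C ^ 2 / 2) / sqrt (2 * PI)) by field; lra.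
lra.
Qed.

Lemma key (B C y : R) (hB : 0 < B) (hBeq : Bstar_eq B)
  (hC : C < 0) (hCeq : ufun B C = 0) : C < y -> y < B -> 0 <= kf B (vfun B C) y.
Proof.
move=> hCy hyB.
have hs := S2_pos.
have hP := Phi_pos (- C).
have hPB := Phi_pos B.
have hPC := Phi_pos C.
have hsym := Phi_sym C.
have hE := fn_pos C.
have hB1 : 0 < 1 - B ^ 2.
  move: hBeq; rewrite /Bstar_eq => hBeq.
  have he := exp_pos (B ^ 2 / 2).
  have hq : 0 < sqrt (2 * PI) * exp (B ^ 2 / 2) * Phi B.
    apply: Rmult_lt_0_compat => //; apply: Rmult_lt_0_compat => //.
  apply: Rnot_le_lt => hle.
  have : (1 - B ^ 2) * (sqrt (2 * PI) * exp (B ^ 2 / 2) * Phi B) <= 0.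
    apply: Rmult_le_0_r => //; lra.
  have -> : (1 - B ^ 2) * (sqrt (2 * PI) * exp (B ^ 2 / 2) * Phi B) = B.
    rewrite -[in RHS]hBeq; ring.
  lra.
set v := vfun B C.
have hX : Phi (- C) * v = (1 - B ^ 2) * Phi C - C * fn C / sqrt (2 * PI).
  rewrite /v /vfun /fn. field. lra.
have hv : v = B ^ 2 - C ^ 2.
  move: hCeq; rewrite /ufun => hCeq.
  have h3 : C / sqrt (2 * PI) * exp (- C ^ 2 / 2) = C * fn C / sqrt (2 * PI).
    rewrite /fn; field; lra.
  rewrite h3 in hCeq.
  apply: (Rmult_eq_reg_l (Phi (- C))); last lra.
  rewrite hX. nra.
have hvpos : 0 < v.
  have : 0 < Phi (- C) * v.
    rewrite hX.
    have : 0 < - C * fn C / sqrt (2 * PI).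
      apply: Rdiv_lt_0_compat => //; nra.
    have : 0 < (1 - B ^ 2) * Phi C by nra.
    have -> : (1 - B ^ 2) * Phi C - C * fn C / sqrt (2 * PI) = (1 - B ^ 2) * Phi C + (- C * fn C / sqrt (2 * PI)) by field; lra.
    lra.
  move=> h. nra.
have hkC : kf B v C = 0.
  rewrite /kf. rewrite hX. field. lra.
have hkB : 0 <= kf B v B.
  rewrite /kf.
  have hfB := fn_inv B.
  move: hBeq; rewrite /Bstar_eq => hBeq.
  have : (1 - B ^ 2) * Phi B = B * fn B / sqrt (2 * PI).
    rewrite -[in X in X * fn B / _]hBeq. rewrite (_ : sqrt (2 * PI) * (1 - B ^ 2) * exp (B ^ 2 / 2) * Phi B * fn B / sqrt (2 * PI)
        = (1 - B ^ 2) * Phi B * (exp (B ^ 2 / 2) * fn B)); last by field; lra.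
    rewrite hfB; ring.
  move=> ->. have := Phi_pos (- B). nra.
case: (Rle_lt_dec y (- C)) => hyC.
- have [c [hc E]] := kf_mvt B v C y ltac:(lra).
  have hfc := fn_pos c.
  have : 0 <= fn c / sqrt (2 * PI) * (B ^ 2 - v - c ^ 2) * (y - C).
    apply: Rmult_le_pos; last lra.
    apply: Rmult_le_pos.
      apply: Rlt_le; apply: Rdiv_lt_0_compat => //.
    rewrite hv. nra.
  lra.
- have [c [hc E]] := kf_mvt B v y B ltac:(lra).
  have hfc := fn_pos c.
  have : fn c / sqrt (2 * PI) * (B ^ 2 - v - c ^ 2) * (B - y) <= 0.
    have h1 : 0 < fn c / sqrt (2 * PI) by apply: Rdiv_lt_0_compat.
    have h2 : B ^ 2 - v - c ^ 2 < 0 by rewrite hv; nra.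
    have : fn c / sqrt (2 * PI) * (B ^ 2 - v - c ^ 2) < 0 by nra.
    move=> h3. nra.
  lra.
Qed.

Theorem lemma3p2 (B C : R)
  (hB : 0 < B) (hBeq : Bstar_eq B)
  (hC : C < 0) (hCeq : ufun B C = 0)
  (t x : R) (ht0 : 0 <= t) (ht1 : t < 1) :
  Vstar B C t x >= fval B t x.
Proof.
rewrite /Vstar. case: (Rlt_dec (C * sqrt (1 - t)) x) => hx; last by apply: Rge_refl.
have hs : 0 < sqrt (1 - t) by apply: sqrt_lt_R0; lra.
have hss : sqrt (1 - t) * sqrt (1 - t) = 1 - t by apply: sqrt_sqrt; lra.
have hS := S2_pos.
set s := sqrt (1 - t) in hx hs hss |- *.
set y := x / s.
have hxy : x = y * s by rewrite /y; field; lra.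
have hy : C < y.
  apply: (Rmult_lt_reg_r s) => //. rewrite -hxy. lra.
have e1 : - x / s = - y by rewrite /y; field; lra.
have e2 : x ^ 2 / (2 * (1 - t)) = y ^ 2 / 2 by rewrite -hss hxy; field; lra.
have e3 : sqrt (2 * PI * (1 - t)) = sqrt (2 * PI) * s.
  rewrite sqrt_mult //; have := PI_RGT_0; lra.
have hE := exp_pos (y ^ 2 / 2).
have hPy := Phi_pos (- y).
rewrite /fval /Ufun -/s e1 e2.
case: (Rlt_dec x (B * s)) => hxb.
- rewrite e3 (_ : x / s = y) //.
  have hyB : y < B by apply: (Rmult_lt_reg_r s) => //; rewrite -hxy.
  have hk := key B C y hB hBeq hC hCeq hy hyB.
  have hi := fn_inv y.
  set v := vfun B C in hk |- *.
  set E := exp (y ^ 2 / 2) in hE hi |- *.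
  have Id : s * sqrt (2 * PI) * Phi (- y) * E * v -
      (sqrt (2 * PI) * s * (1 - B ^ 2) * E * Phi y - x)
      = s * sqrt (2 * PI) * E * kf B v y + y * s * (1 - E * fn y).
    clearbody v E y s. rewrite {1}hxy /kf. field. lra.
  rewrite hi (_ : y * s * (1 - 1) = 0) ?Rplus_0_r in Id; last ring.
  apply: Rminus_ge. rewrite Id. apply: Rle_ge.
  apply: Rmult_le_pos => //. apply: Rlt_le. apply: Rmult_lt_0_compat => //.
  exact: Rmult_lt_0_compat.
- rewrite Rminus_diag_eq //. apply: Rle_ge.
  have hv := vpos B C hB hBeq hC.
  apply: Rmult_le_pos; last lra.
  apply: Rlt_le. apply: Rmult_lt_0_compat => //.
  apply: Rmult_lt_0_compat => //. exact: Rmult_lt_0_compat.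
Qed.
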